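(* For all $n\ge3$, the number of pairwise non-isomorphic graphs among the quotient graphs $Q_R$, $R\in\mathcal C_n^*$, is at least $2^n-2n+1$.
   Context: $S_n$ is the set of permutations of $[n]$ with the weak order (inclusion of inversion sets); a lattice congruence is an equivalence relation compatible with joins and meets. Fences. $]a,b[=\{a+1,\dots,b-1\}$. The fence $f(a,b,L)$, for $1\le a<b\le n$ and $L\subseteq\,]a,b[$, is the set of cover edges joining two permutations that differ by swapping adjacent entries $a,b$, with the values of $L$ left of $a,b$ and those of $]a,b[\setminus L$ to the right. Forcing order: $f(a,b,L)\prec f(c,d,M)$ iff $a\le c<d\le b$, $(a,b)\ne(c,d)$, $M=L\cap\,]c,d[$. Lattice congruences $R$ correspond bijectively to downsets $F_R$ of the forcing order (a cover edge joins equivalent permutations iff it lies in a fence of $F_R$). $R$ is essential if $F_R$ contains no fence $f(a,a+1,\emptyset)$; $\mathcal C_n^*$ is the set of essential congruences. $Q_R$ is the undirected cover graph of $S_n/R$. *)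

(* Defs.v *)
(* Permutations of [n] are encoded as 'S_n = {perm 'I_n};
   values and positions are 0-based (value v in 'I_n stands for v+1 in [n]).
   A permutation s is read as the word s 0, s 1, ..., s (n-1). *)
From HB Require Import structures.
From mathcomp Require Import all_boot all_order all_fingroup.
Set Implicit Arguments. Unset Strict Implicit. Unset Printing Implicit Defensive.

Section Weak.
Variable n : nat.

Definition inv_set (s : 'S_n) : {set 'I_n * 'I_n} :=
  [set ab : 'I_n * 'I_n | (ab.1 < ab.2) && ((s^-1)%g ab.2 < (s^-1)%g ab.1)].

Definition wle (p q : 'S_n) : Prop := inv_set p \subset inv_set q.

Definition is_join (p q w : 'S_n) : Prop :=
  [/\ wle p w, wle q w & forall u, wle p u -> wle q u -> wle w u].
Definition is_meet (p q w : 'S_n) : Prop :=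
  [/\ wle w p, wle w q & forall u, wle u p -> wle u q -> wle u w].

Definition lattice_congruence (R : rel 'S_n) : Prop :=
  [/\ reflexive R, symmetric R, transitive R,
      (forall x y z w w', R x y -> is_join x z w -> is_join y z w' -> R w w') &
      (forall x y z w w', R x y -> is_meet x z w -> is_meet y z w' -> R w w')].

(* the cover edge {p,q} lies in the fence f(a,b,L): p, q differ by swapping
   the adjacent entries a,b (at positions i, i+1), the values of ]a,b[ to the
   left of the pair are exactly L (the others being to the right). *)
Definition fence_edge (a b : 'I_n) (L : {set 'I_n}) (p q : 'S_n) : Prop :=
  a < b /\
  exists i j : 'I_n,
    [/\ i.+1 = j :> nat, q i = p j, q j = p i /\
        (forall k, k != i -> k != j -> q k = p k),
        ((p i == a) && (p j == b)) || ((p i == b) && (p j == a)) &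
        L = [set c : 'I_n | (a < c < b) && ((p^-1)%g c < i)]].

(* F_R: the fences whose edges are contracted by R (by the standard theory
   a fence is contracted entirely or not at all) *)
Definition in_FR (R : rel 'S_n) (a b : 'I_n) (L : {set 'I_n}) : Prop :=
  exists p q, fence_edge a b L p q /\ R p q.

Definition essential (R : rel 'S_n) : Prop :=
  forall a b : 'I_n, b = a.+1 :> nat -> ~ in_FR R a b set0.

Definition cls (R : rel 'S_n) (p : 'S_n) : {set 'S_n} := [set q | R p q].
Definition qverts (R : rel 'S_n) : {set {set 'S_n}} :=
  [set cls R p | p in [set: 'S_n]].
Definition qle (X Y : {set 'S_n}) : Prop :=
  exists x y, [/\ x \in X, y \in Y & wle x y].
Definition qcover (R : rel 'S_n) (X Y : {set 'S_n}) : Prop :=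
  [/\ X \in qverts R, Y \in qverts R, X != Y, qle X Y &
      forall Z, Z \in qverts R -> qle X Z -> qle Z Y -> Z = X \/ Z = Y].
Definition qedge (R : rel 'S_n) (X Y : {set 'S_n}) : Prop :=
  qcover R X Y \/ qcover R Y X.

Definition Q_iso (R S : rel 'S_n) : Prop :=
  exists f : {set 'S_n} -> {set 'S_n},
    [/\ {in qverts R &, injective f}, f @: qverts R = qverts S &
        forall X Y, X \in qverts R -> Y \in qverts R ->
          (qedge R X Y <-> qedge S (f X) (f Y))].

End Weak.

(* Main.v *)
From HB Require Import structures.
From mathcomp Require Import all_boot all_order all_fingroup.
From mathcomp Require Import zify.
Require Import Defs.
Set Implicit Arguments. Unset Strict Implicit. Unset Printing Implicit Defensive.

Section Basics.
Variable n : nat.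
Implicit Types (s p q x y z w : 'S_n) (a b c : 'I_n).

Definition pos s (v : 'I_n) : 'I_n := (s^-1)%g v.
Definition inv s a b : bool := (a < b) && (pos s b < pos s a).

Lemma wleP p q : wle p q <-> forall a b, inv p a b -> inv q a b.
Proof.
split.
- by move=> /subsetP H a b Hab; have := H (a, b); rewrite !inE; apply.
- by move=> H; apply/subsetP => -[a b]; rewrite !inE; apply: H.
Qed.

Definition valid (I : rel 'I_n) :=
  [/\ forall a b, I a b -> a < b,
      forall a b c, I a b -> I b c -> I a c &
      forall a b c, a < b -> b < c -> I a c -> I a b || I b c].

Lemma pos_inj s : injective (pos s).
Proof. by move=> u v; rewrite /pos => /perm_inj. Qed.

Lemma valid_inv s : valid (inv s).
Proof.
split.
- by move=> a b /andP[].
- move=> a b c /andP[h1 h2] /andP[h3 h4]; apply/andP; split; lia.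
- move=> a b c h1 h2 /andP[h3 h4]; rewrite /inv h1 h2 /=.
  case: (ltngtP (pos s b) (pos s a)) => //= h5.
  + lia.
  + by have := pos_inj (val_inj h5) => e; rewrite e ltnn in h1.
Qed.

Definition compl (I : rel 'I_n) : rel 'I_n := fun a b => (a < b) && ~~ I a b.

Lemma valid_compl I : valid I -> valid (compl I).
Proof.
case=> h1 h2 h3; split.
- by move=> a b; rewrite /compl => /andP[].
- move=> a b c; rewrite /compl => /andP[ab nab] /andP[bc nbc]; rewrite (ltn_trans ab bc) /=.
  apply/negP => Iac; have := h3 _ _ _ ab bc Iac; by rewrite (negbTE nab) (negbTE nbc).
- move=> a b c ab bc; rewrite /compl => /andP[ac nac]; rewrite ab bc /=.
  rewrite -negb_and; apply/negP => /andP[Iab Ibc]; by rewrite (h2 _ _ _ Iab Ibc) in nac.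
Qed.

Section FromOrder.
Variable lt : rel 'I_n.
Hypotheses (ltirr : irreflexive lt) (lttr : transitive lt)
  (lttot : forall a b, a != b -> lt a b || lt b a).

Definition rk (v : 'I_n) : nat := #|[set t | lt t v]|.

Lemma rk_lt v : rk v < n.
Proof.
have sub : [set t | lt t v] \subset [set~ v].
  by apply/subsetP => t; rewrite !inE; apply: contraTneq => ->; rewrite ltirr.
have := subset_leq_card sub; rewrite cardsC1 card_ord /rk.
have := ltn_ord v; lia.
Qed.

Lemma rk_mono v t : lt v t -> rk v < rk t.
Proof.
move=> vw; apply: proper_card; apply/properP; split.
- by apply/subsetP => u; rewrite !inE => uv; apply: lttr uv vw.
- by exists v; rewrite !inE ?ltirr.
Qed.

Definition rkO v : 'I_n := Ordinal (rk_lt v).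

Lemma rkO_inj : injective rkO.
Proof.
move=> v t /(congr1 val) /= e; apply/eqP; apply/negPn/negP => ne.
by case/orP: (lttot ne) => /rk_mono; rewrite e ltnn.
Qed.

Lemma order_perm : exists s, forall v t, (pos s v < pos s t) = lt v t.
Proof.
exists ((perm rkO_inj)^-1)%g => v t; rewrite /pos invgK !permE /=.
case vw: (lt v t); first by apply: rk_mono.
case: (eqVneq v t) => [->|ne]; first by rewrite ltnn.
have := lttot ne; rewrite vw /= => /rk_mono h; apply/negbTE; rewrite -leqNgt; lia.
Qed.
End FromOrder.

Lemma valid_perm I : valid I -> exists s, forall a b, inv s a b = I a b.
Proof.
case=> h1 h2 h3.
pose lt := fun v t : 'I_n => ((v < t) && ~~ I v t) || ((t < v) && I t v).
have irr : irreflexive lt by move=> v; rewrite /lt ltnn.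
have tot : forall a b, a != b -> lt a b || lt b a.
  move=> a b ne; rewrite /lt; case: (ltngtP a b) => /= ab.
  - by case: (I a b).
  - by case: (I b a); rewrite ?orbT.
  - by rewrite (val_inj ab) eqxx in ne.
have tr : transitive lt.
  move=> v u t; rewrite /lt.
  case: (ltngtP u v) => uv; case: (ltngtP v t) => vw; case: (ltngtP u t) => uw;
    rewrite /= ?andbF ?andbT ?orbF ?andbT //=; try lia.
  1-8: move=> H1 H2.
  - apply/negP => H3; have := h3 _ _ _ uv vw H3; by rewrite (negbTE H1) (negbTE H2).
  - apply/negP => H3; by rewrite (h2 _ _ _ H3 H2) in H1.
  - have := h3 _ _ _ uw uv H2; by rewrite (negbTE H1) orbF.
  - have e := val_inj uw; subst; by rewrite H2 in H1.
  - apply/negP => H3; by rewrite (h2 _ _ _ H1 H3) in H2.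
  - have := h3 _ _ _ vw uw H1; by rewrite (negbTE H2).
  - have e := val_inj uw; subst; by rewrite H1 in H2.
  - exact: h2 H2 H1.
have [s Hs] := order_perm irr tr tot.
exists s => a b; rewrite /inv Hs /lt.
case: (ltngtP a b) => ab /=; rewrite ?andbF //=.
by apply/esym/negbTE; apply/negP => /h1; lia.
by apply/esym/negbTE; apply/negP => /h1; lia.
Qed.
End Basics.

Section Clos.
Variable n : nat.
Variables A B : rel 'I_n.
Hypotheses (hA : valid A) (hB : valid B).

Definition ee : rel 'I_n := fun u v => A u v || B u v.
Definition clos : rel 'I_n := fun u v => (u < v) && connect ee u v.

Lemma ee_lt u v : ee u v -> u < v.
Proof. case: hA hB => [a1 _ _] [b1 _ _]; by case/orP => [/a1|/b1]. Qed.

Lemma path_le p x : path ee x p -> x <= last x p.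
Proof.
elim: p x => //= y p IH x /andP[/ee_lt h /IH]; lia.
Qed.

Lemma path_lt p x : path ee x p -> p != [::] -> x < last x p.
Proof.
case: p => //= y p /andP[/ee_lt h /path_le]; lia.
Qed.

Lemma clos_lt u v : clos u v -> u < v.
Proof. by case/andP. Qed.

Lemma ee_clos u v : ee u v -> clos u v.
Proof. by move=> h; rewrite /clos (ee_lt h) /=; apply: connect1. Qed.

Lemma clos_trans u v t : clos u v -> clos v t -> clos u t.
Proof.
case/andP=> h1 c1 /andP[h2 c2]; rewrite /clos (ltn_trans h1 h2) /=.
exact: connect_trans c1 c2.
Qed.

Lemma clos_dec u v : clos u v -> ee u v || [exists c : 'I_n, [&& u < c, c < v, ee u c & clos c v]].
Proof.
case/andP=> uv /connectP[[|c p] /=]; first by move=> _ e; rewrite e ltnn in uv.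
case/andP=> e1 pth ->.
case: p pth => [|d p] pth /=; first by rewrite e1.
apply/orP; right; apply/existsP; exists c.
have := path_lt pth isT => /= h; rewrite (ee_lt e1) h e1 /= /clos h /=.
by apply/connectP; exists (d :: p).
Qed.

Lemma clos_sub (W : rel 'I_n) : valid W -> (forall a b, A a b -> W a b) ->
  (forall a b, B a b -> W a b) -> forall a b, clos a b -> W a b.
Proof.
case=> w1 w2 w3 hAW hBW a b /andP[ab /connectP[p pth eb]]; subst b.
elim: p a pth ab => [|c p IH] a /=; first by move=> _ h; lia.
case/andP=> e1 pth _.
have Wac : W a c by case/orP: e1 => [/hAW|/hBW].
case: p pth IH => [|d p] pth IH //=.
exact: (w2 _ _ _ Wac (IH _ pth (path_lt pth isT))).
Qed.

Lemma clos_valid : valid clos.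
Proof.
case: hA hB => [a1 a2 a3] [b1 b2 b3].
split; [exact: clos_lt | exact: clos_trans | ].
move=> a b c ab bc /andP[ac /connectP[p pth ec]]; subst c.
elim: p a pth ab bc ac => [|d p IH] a /=; first by move=> _ ab bc ac; lia.
case/andP=> e1 pth ab bc ac.
case: (ltngtP d b) => db.
- case: p pth IH bc ac => [|f p] pth IH bc ac /=; first by move: bc => /=; lia.
  have := IH d pth db bc (path_lt pth isT); case/orP => [h|->]; last by rewrite orbT.
  by rewrite (clos_trans (ee_clos e1) h).
- have cotr : A a b || A b d || (B a b || B b d).
    by case/orP: e1 => [/(a3 _ _ _ ab db) -> //|/(b3 _ _ _ ab db) ->]; rewrite orbT.
  have [h|h] : ee a b \/ ee b d.
    by move: cotr; rewrite /ee; case: (A a b); case: (A b d); case: (B a b); case: (B b d); auto.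
  + by rewrite (ee_clos h).
  + apply/orP; right; rewrite /clos.
    rewrite bc /=.
    by apply: connect_trans (connect1 h) _; apply/connectP; exists p.

- have e : d = b by apply: val_inj.
  by subst d; rewrite (ee_clos e1).
Qed.

Lemma clos_char (W : rel 'I_n) : valid W -> (forall a b, A a b -> W a b) ->
  (forall a b, B a b -> W a b) -> (forall a b, W a b -> clos a b) ->
  forall a b, W a b -> [|| A a b, B a b | [exists c : 'I_n, [&& a < c, c < b, W a c & W c b]]].
Proof.
move=> hW hAW hBW hWC a b /hWC /clos_dec /orP[e|/existsP[c /and4P[ac cb e1 cl]]].
  by case/orP: e => ->; rewrite ?orbT.
apply/orP; right; apply/orP; right; apply/existsP; exists c.
rewrite ac cb /=; apply/andP; split; first by case/orP: e1 => [/hAW|/hBW].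
exact: clos_sub hW hAW hBW _ _ cl.
Qed.
End Clos.

Section Lat.
Variable n : nat.
Implicit Types (x y z w u : 'S_n) (a b c : 'I_n).

Lemma join_char x z w : is_join x z w -> forall a b,
  inv w a b = [|| inv x a b, inv z a b | [exists c : 'I_n, [&& a < c, c < b, inv w a c & inv w c b]]].
Proof.
case=> /wleP xw /wleP zw hj a b.
have vC := clos_valid (valid_inv x) (valid_inv z).
have [u Hu] := valid_perm vC.
have xu : wle x u by apply/wleP => c d h; rewrite Hu; apply: (ee_clos (valid_inv x) (valid_inv z)); apply/orP; left.
have zu : wle z u by apply/wleP => c d h; rewrite Hu; apply: (ee_clos (valid_inv x) (valid_inv z)); apply/orP; right.
have /wleP wu := hj u xu zu.
apply/idP/idP.
- apply: (clos_char (valid_inv x) (valid_inv z) (valid_inv w) xw zw).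
  by move=> c d /wu; rewrite Hu.
- case: (valid_inv w) => _ tr _.
  case/or3P => [/xw|/zw|/existsP[c /and4P[_ _ h1 h2]]] //; exact: tr h1 h2.
Qed.

Lemma meet_char x z w : is_meet x z w -> forall a b,
  compl (inv w) a b = [|| compl (inv x) a b, compl (inv z) a b |
     [exists c : 'I_n, [&& a < c, c < b, compl (inv w) a c & compl (inv w) c b]]].
Proof.
case=> /wleP wx /wleP wz hm a b.
have vN := clos_valid (valid_compl (valid_inv x)) (valid_compl (valid_inv z)).
have [u Hu] := valid_perm (valid_compl vN).
have ux : wle u x.
  apply/wleP => c d; rewrite Hu /compl => /andP[cd nN]; apply/negPn/negP => nx.
  by move: nN; rewrite (ee_clos (valid_compl (valid_inv x)) (valid_compl (valid_inv z))) // /ee /compl cd nx.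
have uz : wle u z.
  apply/wleP => c d; rewrite Hu /compl => /andP[cd nN]; apply/negPn/negP => nx.
  by move: nN; rewrite (ee_clos (valid_compl (valid_inv x)) (valid_compl (valid_inv z))) // /ee /compl cd nx orbT.
have /wleP uw := hm u ux uz.
have sx : forall c d, compl (inv x) c d -> compl (inv w) c d.
  by move=> c d /andP[cd nx]; rewrite /compl cd /=; apply: contra nx; apply: wx.
have sz : forall c d, compl (inv z) c d -> compl (inv w) c d.
  by move=> c d /andP[cd nx]; rewrite /compl cd /=; apply: contra nx; apply: wz.
apply/idP/idP.
- apply: (clos_char (valid_compl (valid_inv x)) (valid_compl (valid_inv z))
           (valid_compl (valid_inv w)) sx sz).
  move=> c d /andP[cd nw]; apply/negPn/negP => nN.
  have : inv u c d by rewrite Hu /compl cd nN.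
  by move/uw; rewrite (negbTE nw).
- case: (valid_compl (valid_inv w)) => _ tr _.
  case/or3P => [/sx|/sz|/existsP[c /and4P[_ _ h1 h2]]] //; exact: tr h1 h2.
Qed.
End Lat.

Section Vis.
Variable n : nat.
Variable H : 'I_n -> 'I_n -> {set 'I_n} -> bool.
Variable D : 'I_n -> 'I_n -> bool.
Implicit Types (s t x y z w u : 'S_n) (a b c : 'I_n).

Definition free s a b := [forall c : 'I_n, (a < c < b) ==> (inv s a c == ~~ inv s c b)].
Definition Ls s a b := [set c : 'I_n | (a < c < b) && inv s a c].
Definition vis s a b := [&& inv s a b, ~~ D a b & ~~ (free s a b && H a b (Ls s a b))].
Definition phi s : {set 'I_n * 'I_n} := [set ab | vis s ab.1 ab.2].

Lemma phiP x y : phi x = phi y -> forall a b, vis x a b = vis y a b.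
Proof. by move=> /setP e a b; have := e (a, b); rewrite !inE. Qed.

Lemma phiP' x y : (forall a b, vis x a b = vis y a b) -> phi x = phi y.
Proof. by move=> h; apply/setP => -[a b]; rewrite !inE h. Qed.

Definition agree s t a b := forall c, a < c < b -> inv s a c = inv t a c /\ inv s c b = inv t c b.

Lemma agree_sym s t a b : agree s t a b -> agree t s a b.
Proof. by move=> h c /h [-> ->]. Qed.

Lemma agree_free s t a b : agree s t a b -> free s a b = free t a b.
Proof.
move=> h; apply: eq_forallb => c; case hc: (a < c < b) => //=.
by have [-> ->] := h c hc.
Qed.

Lemma agree_Ls s t a b : agree s t a b -> Ls s a b = Ls t a b.
Proof.
move=> h; apply/setP => c; rewrite !inE; case hc: (a < c < b) => //=.
by have [-> _] := h c hc.
Qed.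

Lemma inv_det s a b c : a < c -> c < b -> inv s a c = inv s c b -> inv s a b = inv s a c.
Proof.
case: (valid_inv s) => _ tr cot ac cb e.
case hac: (inv s a c).
- have hcb : inv s c b by rewrite -e.
  by rewrite (tr _ _ _ hac hcb).
- apply/negbTE/negP => hab; have := cot _ _ _ ac cb hab; by rewrite hac -e hac.
Qed.

Lemma nonfree_det s t a b : agree s t a b -> ~~ free s a b -> inv s a b = inv t a b.
Proof.
move=> ag; rewrite negb_forall => /existsP[c]; rewrite negb_imply => /andP[hc].
case/andP: (hc) => ac cb => hne.
have e : inv s a c = inv s c b by move: hne; case: (inv s a c); case: (inv s c b).
have [e1 e2] := ag c hc.
rewrite (inv_det ac cb e) (inv_det ac cb (_ : inv t a c = inv t c b)) //.
by rewrite -e1 -e2.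
Qed.

Lemma up_free x w a b : wle x w -> inv x a b -> free w a b ->
  free x a b /\ Ls x a b = Ls w a b.
Proof.
move=> /wleP xw ixab fw.
case: (valid_inv x) => _ trx cotx.
have fx : free x a b.
  apply/forallP => c; apply/implyP => /andP[ac cb].
  have := forallP fw c; rewrite ac cb /= => /eqP fwc.
  case h1: (inv x a c); case h2: (inv x c b) => //=.
  - by move: fwc; rewrite (xw _ _ h1) (xw _ _ h2).
  - by have := cotx _ _ _ ac cb ixab; rewrite h1 h2.
split => //; apply/setP => c; rewrite !inE; case hc: (a < c < b) => //=.
case/andP: hc => ac cb.
have := forallP fw c; rewrite ac cb /= => /eqP fwc.
have := forallP fx c; rewrite ac cb /= => /eqP fxc.
case h1: (inv x a c); first by rewrite (xw _ _ h1).
move: fxc; rewrite h1 => /esym/negbFE/xw; rewrite fwc => ->.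
by [].
Qed.

Lemma down_free w y a b : wle w y -> a < b -> ~~ inv y a b -> free w a b ->
  free y a b /\ Ls y a b = Ls w a b.
Proof.
move=> /wleP wy ab niy fw.
case: (valid_inv y) => _ try coty.
have fy : free y a b.
  apply/forallP => c; apply/implyP => /andP[ac cb].
  have := forallP fw c; rewrite ac cb /= => /eqP fwc.
  case h1: (inv y a c); case h2: (inv y c b) => //=.
  - by rewrite (try _ _ _ h1 h2) in niy.
  - move: fwc; case e1: (inv w a c); first by rewrite (wy _ _ e1) in h1.
    case e2: (inv w c b) => //; by rewrite (wy _ _ e2) in h2.
split => //; apply/setP => c; rewrite !inE; case hc: (a < c < b) => //=.
case/andP: hc => ac cb.
have := forallP fw c; rewrite ac cb /= => /eqP fwc.
have := forallP fy c; rewrite ac cb /= => /eqP fyc.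
case e1: (inv w a c); first by rewrite (wy _ _ e1).
apply/negbTE; rewrite fyc negbK.
by move: fwc; rewrite e1 => /esym/negbFE/wy.
Qed.

Variable g : nat.
Hypothesis hH : forall a b L, a < b -> b - a < g -> ~~ H a b L.
Hypothesis hD1 : forall a b, a < b -> b - a < g -> ~~ D a b.
Hypothesis hD2 : forall a b, a < b -> g < b - a -> D a b.

Lemma vis_small s a b : a < b -> b - a < g -> vis s a b = inv s a b.
Proof. by move=> ab h; rewrite /vis (hD1 ab h) (negbTE (hH _ ab h)) andbF andbT. Qed.

Lemma agree_phi x y a b : phi x = phi y -> a < b -> b - a <= g -> agree x y a b.
Proof.
move=> e ab hg c /andP[ac cb]; split.
- by rewrite -(vis_small x ac) ?(phiP e) ?vis_small //; lia.
- by rewrite -(vis_small x cb) ?(phiP e) ?vis_small //; lia.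
Qed.

Lemma join_one x y z w w' a b : phi x = phi y -> is_join x z w -> is_join y z w' ->
  a < b -> ~~ D a b -> agree w w' a b -> vis w a b -> vis w' a b.
Proof.
move=> hxy hj hj' ab nD ag /and3P[iw _ nh].
rewrite /vis nD -(agree_free ag) -(agree_Ls ag) nh /= andbT.
case fw: (free w a b); last by rewrite -(nonfree_det ag) ?fw.
move: nh; rewrite fw /= => nh.
case: (hj) => hxw _ _; case: (hj') => _ /wleP zw' _; case: (hj') => /wleP yw' _ _.
move: iw; rewrite (join_char hj) => /or3P[ix|iz|/existsP[c /and4P[ac cb h1 h2]]].
- have [fx Lx] := up_free hxw ix fw.
  have : vis x a b by rewrite /vis ix nD fx Lx (negbTE nh).
  by rewrite (phiP hxy) => /and3P[/yw'].
- exact: zw'.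
- by have := forallP fw c; rewrite ac cb h1 h2.
Qed.

Lemma meet_one x y z w w' a b : phi x = phi y -> is_meet x z w -> is_meet y z w' ->
  a < b -> ~~ D a b -> b - a <= g -> agree w w' a b -> vis w a b -> vis w' a b.
Proof.
move=> hxy hm hm' ab nD hg ag /and3P[iw _ nh].
rewrite /vis nD -(agree_free ag) -(agree_Ls ag) nh /= andbT.
case fw: (free w a b); last by rewrite -(nonfree_det ag) ?fw.
move: nh; rewrite fw /= => nh.
have fw' : free w' a b by rewrite -(agree_free ag).
case: (hm) => /wleP wx /wleP wz _; case: (hm') => hw'y _ _.
apply/negPn/negP => nw'.
have : compl (inv w') a b by rewrite /compl ab nw'.
rewrite (meet_char hm') => /or3P[/andP[_ ny]|/andP[_ nz]|/existsP[c /and4P[ac cb h1 h2]]].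
- have [fy Ly] := down_free hw'y ab ny fw'.
  have axy := agree_phi hxy ab hg.
  have : ~~ vis x a b by rewrite (phiP hxy) /vis (negbTE ny).
  rewrite /vis (wx _ _ iw) nD /= negbK (agree_free axy) (agree_Ls axy) fy Ly.
  by rewrite -(agree_Ls ag) (negbTE nh).
- by rewrite (wz _ _ iw) in nz.
- move: h1 h2; rewrite /compl ac cb /= => h1 h2.
  by have := forallP fw' c; rewrite ac cb (negbTE h1) (negbTE h2).
Qed.

Lemma agree_step (P : 'S_n -> 'S_n -> 'S_n -> Prop) (F : bool -> bool -> bool -> bool)
  (G : bool -> bool -> bool)
  (chr : forall x z w, P x z w -> forall a b, a < b -> inv w a b =
     F (inv x a b) (inv z a b) [exists c : 'I_n, [&& a < c, c < b & G (inv w a c) (inv w c b)]])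
  x y z w w' : phi x = phi y -> P x z w -> P y z w' ->
  forall d a b, a < b -> b - a <= d -> b - a < g -> inv w a b = inv w' a b.
Proof.
move=> hxy hw hw'; elim=> [|d IH] a b ab hd hg; first by lia.
rewrite (chr _ _ _ hw _ _ ab) (chr _ _ _ hw' _ _ ab) -!(vis_small _ ab hg) (phiP hxy).
congr (F _ _ _); apply: eq_existsb => c.
case ac: (a < c); case cb: (c < b) => //=.
by rewrite (IH a c) ?(IH c b) //; lia.
Qed.

Lemma join_char' x z w : is_join x z w -> forall a b, a < b -> inv w a b =
  (fun p q r => [|| p, q | r]) (inv x a b) (inv z a b)
    [exists c : 'I_n, [&& a < c, c < b & (fun p q => p && q) (inv w a c) (inv w c b)]].
Proof. by move=> h a b _; rewrite (join_char h); congr [|| _, _ | _]; apply: eq_existsb => c; rewrite andbA. Qed.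

Lemma meet_char' x z w : is_meet x z w -> forall a b, a < b -> inv w a b =
  (fun p q r => ~~ [|| ~~ p, ~~ q | r]) (inv x a b) (inv z a b)
    [exists c : 'I_n, [&& a < c, c < b & (fun p q => ~~ p && ~~ q) (inv w a c) (inv w c b)]].
Proof.
move=> h a b ab; rewrite -[LHS]negbK; congr (~~ _).
have := meet_char h a b; rewrite /compl ab /= => ->.
congr [|| _, _ | _]; apply: eq_existsb => c.
by case ac: (a < c); case cb: (c < b) => //=; rewrite (ltn_trans ac cb).
Qed.

Lemma agree_join x y z w w' a b : phi x = phi y -> is_join x z w -> is_join y z w' ->
  a < b -> b - a <= g -> agree w w' a b.
Proof.
move=> hxy hw hw' ab hg c /andP[ac cb].
by rewrite !(agree_step (@join_char' ) hxy hw hw' (d := g)) //; lia.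
Qed.

Lemma agree_meet x y z w w' a b : phi x = phi y -> is_meet x z w -> is_meet y z w' ->
  a < b -> b - a <= g -> agree w w' a b.
Proof.
move=> hxy hw hw' ab hg c /andP[ac cb].
by rewrite !(agree_step (@meet_char' ) hxy hw hw' (d := g)) //; lia.
Qed.

Lemma cong_join x y z w w' : phi x = phi y -> is_join x z w -> is_join y z w' -> phi w = phi w'.
Proof.
move=> hxy hw hw'; apply: phiP' => a b.
case ab: (a < b); last by rewrite /vis /inv ab.
case hD: (D a b); first by rewrite /vis hD !andbF.
have hg : b - a <= g by rewrite leqNgt; apply/negP => /(hD2 ab); rewrite hD.
have ag := agree_join hxy hw hw' ab hg.
apply/idP/idP.
- exact: join_one hxy hw hw' ab (negbT hD) ag.
- exact: join_one (esym hxy) hw' hw ab (negbT hD) (agree_sym ag).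
Qed.

Lemma cong_meet x y z w w' : phi x = phi y -> is_meet x z w -> is_meet y z w' -> phi w = phi w'.
Proof.
move=> hxy hw hw'; apply: phiP' => a b.
case ab: (a < b); last by rewrite /vis /inv ab.
case hD: (D a b); first by rewrite /vis hD !andbF.
have hg : b - a <= g by rewrite leqNgt; apply/negP => /(hD2 ab); rewrite hD.
have ag := agree_meet hxy hw hw' ab hg.
apply/idP/idP.
- exact: meet_one hxy hw hw' ab (negbT hD) hg ag.
- exact: meet_one (esym hxy) hw' hw ab (negbT hD) hg (agree_sym ag).
Qed.

End Vis.

Section Main.
Variable n : nat.
Implicit Types (s p q x y z w : 'S_n) (a b c : 'I_n).

Definition FT := ('I_n * 'I_n * {set 'I_n})%type.
Definition itv a b : {set 'I_n} := [set c : 'I_n | a < c < b].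
Definition Ess : {set FT} := [set f : FT | (f.1.1.+1 < f.1.2) && (f.2 \subset itv f.1.1 f.1.2)].
Definition gapf (f : FT) : nat := f.1.2 - f.1.1.
Definition leF : rel FT := fun f f' => gapf f' <= gapf f.
Definition fl := sort leF (enum Ess).
Definition key (f : FT) := index f fl.
Definition Hk k a b L := ((a, b, L) \in Ess) && (key (a, b, L) < k).
Definition Dk k a b := [forall L : {set 'I_n}, (L \subset itv a b) ==> Hk k a b L].
Definition phik k := phi (Hk k) (Dk k).
Definition Rk k : rel 'S_n := fun p q => phik k p == phik k q.

Lemma mem_fl f : (f \in fl) = (f \in Ess).
Proof. by rewrite /fl mem_sort mem_enum. Qed.

Lemma uniq_fl : uniq fl.
Proof. by rewrite /fl sort_uniq enum_uniq. Qed.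

Lemma size_fl : size fl = #|Ess|.
Proof. by rewrite /fl size_sort cardE. Qed.

Lemma leF_trans : transitive leF.
Proof. move=> y x z; rewrite /leF; lia. Qed.

Lemma sorted_fl : sorted leF fl.
Proof. by apply: sort_sorted => f f'; rewrite /leF leq_total. Qed.

Lemma key_order f f' : f \in Ess -> f' \in Ess -> gapf f < gapf f' -> key f' < key f.
Proof.
rewrite -!mem_fl => hf hf' hg; rewrite /key.
case: (ltngtP (index f fl) (index f' fl)) => // h.
- have := sorted_ltn_index leF_trans sorted_fl f f' hf hf' h; rewrite /leF; lia.
- have e : f = f' by rewrite -(nth_index f hf) h nth_index.
  by subst; rewrite ltnn in hg.
Qed.

Lemma Ess_gap f : f \in Ess -> 2 <= gapf f.
Proof. by rewrite inE /gapf => /andP[h _]; lia. Qed.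

Lemma cond k : exists g,
  [/\ forall a b L, a < b -> b - a < g -> ~~ Hk k a b L,
      forall a b, a < b -> b - a < g -> ~~ Dk k a b &
      forall a b, a < b -> g < b - a -> Dk k a b].
Proof.
have hD1 : forall g, (forall a b L, a < b -> b - a < g -> ~~ Hk k a b L) ->
   forall a b, a < b -> b - a < g -> ~~ Dk k a b.
  move=> g hH a b ab hg; apply/negP => /forallP /(_ set0); rewrite sub0set /=.
  by apply/negP; apply: hH.
pose P := [pred f | (f \in Ess) && (k <= key f)].
case: (pickP P) => [f0 Pf0 | none].
- case: (arg_maxnP gapf Pf0) => fm /andP[Efm kfm] maxm.
  have hH : forall a b L, a < b -> b - a < gapf fm -> ~~ Hk k a b L.
    move=> a b L ab hg; apply/negP => /andP[E1 k1].
    have := key_order E1 Efm hg; lia.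
  exists (gapf fm); split => //; first exact: hD1.
  move=> a b ab hg; apply/forallP => L; apply/implyP => sL.
  have E1 : (a, b, L) \in Ess.
    by rewrite inE /= sL andbT; have := Ess_gap Efm; lia.
  rewrite /Hk E1 /= ltnNge; apply/negP => kk.
  have := maxm (a, b, L); rewrite /P /= E1 kk /= => /(_ isT); move: hg; rewrite /gapf /=; lia.
- have hH : forall a b L, a < b -> b - a < 1 -> ~~ Hk k a b L by move=> a b L ab; lia.
  exists 1; split => //; first exact: hD1.
  move=> a b ab hg; apply/forallP => L; apply/implyP => sL.
  have E1 : (a, b, L) \in Ess by rewrite inE /= sL andbT; lia.
  have := none (a, b, L); rewrite /P /= E1 /= => /negbT; rewrite -ltnNge => h.
  by rewrite /Hk E1.
Qed.

Lemma Rk_cong k : lattice_congruence (Rk k).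
Proof.
have [g [hH hD1 hD2]] := cond k.
split.
- by move=> p; rewrite /Rk.
- by move=> p q; rewrite /Rk eq_sym.
- by move=> q p r; rewrite /Rk => /eqP -> /eqP ->.
- move=> x y z w w' /eqP hxy hw hw'; apply/eqP.
  exact: (cong_join hH hD1 hD2 hxy hw hw').
- move=> x y z w w' /eqP hxy hw hw'; apply/eqP.
  exact: (cong_meet hH hD1 hD2 hxy hw hw').
Qed.

Lemma Hk_adj k a b L : b = a.+1 :> nat -> Hk k a b L = false.
Proof. by move=> e; rewrite /Hk inE /= e ltnn. Qed.

Lemma Rk_ess k : essential (Rk k).
Proof.
move=> a b e [p [q [[ab [i [j [ij qi [qj _] hij _]]]] /eqP hR]]].
have hv : forall s, vis (Hk k) (Dk k) s a b = inv s a b.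
  move=> s; rewrite /vis (Hk_adj _ _ e) andbF andbT.
  have -> : Dk k a b = false.
    by apply/negbTE/negP => /forallP /(_ set0); rewrite sub0set Hk_adj.
  by rewrite andbT.
have := phiP hR a b; rewrite !hv /inv ab /= /pos.
have pi : forall (s : 'S_n) t, (s^-1)%g (s t) = t by move=> s t; rewrite permK.
case/orP: hij => /andP[/eqP pia /eqP pjb].
- have -> : (p^-1)%g a = i by rewrite -pia pi.
  have -> : (p^-1)%g b = j by rewrite -pjb pi.
  have -> : (q^-1)%g b = i by rewrite -pjb -qi pi.
  have -> : (q^-1)%g a = j by rewrite -pia -qj pi.
  by rewrite -ij ltnSn ltnNge leqnSn.
- have -> : (p^-1)%g a = j by rewrite -pjb pi.
  have -> : (p^-1)%g b = i by rewrite -pia pi.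
  have -> : (q^-1)%g b = j by rewrite -pia -qj pi.
  have -> : (q^-1)%g a = i by rewrite -pjb -qi pi.
  by rewrite -ij ltnSn ltnNge leqnSn.
Qed.


Lemma Hk_mono k a b L : Hk k a b L -> Hk k.+1 a b L.
Proof. by case/andP=> h1 h2; rewrite /Hk h1 ltnS ltnW. Qed.

Lemma Dk_mono k a b : Dk k a b -> Dk k.+1 a b.
Proof.
move=> /forallP h; apply/forallP => L; apply/implyP => sL.
by apply: Hk_mono; have := h L; rewrite sL.
Qed.

Lemma phik_mono k p q : phik k p = phik k q -> phik k.+1 p = phik k.+1 q.
Proof.
move=> hpq; have [g [hH hD1 hD2]] := cond k.
apply: phiP' => a b.
case ab: (a < b); last by rewrite /vis /inv ab.
case hD: (Dk k.+1 a b); first by rewrite /vis hD !andbF.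
have nD : ~~ Dk k a b by apply/negP => /Dk_mono; rewrite hD.
have hg : b - a <= g by rewrite leqNgt; apply/negP => /(hD2 _ _ ab); rewrite (negbTE nD).
have ag := agree_phi hH hD1 hpq ab hg.
have down : forall s, vis (Hk k.+1) (Dk k.+1) s a b -> vis (Hk k) (Dk k) s a b.
  move=> s /and3P[i1 _ i3]; rewrite /vis i1 nD /=; apply: contra i3.
  by case/andP=> -> /Hk_mono.
have e := phiP hpq a b.
case vp: (vis (Hk k) (Dk k) p a b).
- move: (vp); rewrite e => vq.
  case/and3P: vp => ip _ _; case/and3P: vq => iq _ _.
  by rewrite /vis ip iq (agree_free ag) (agree_Ls ag).
- move: (vp); rewrite e => vq.
  apply/idP/idP => /down; by rewrite ?vp ?vq.
Qed.

Section Lex.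
Variable kf : 'I_n -> nat.
Definition lex : rel 'I_n := fun v t => (kf v < kf t) || ((kf v == kf t) && (v < t)).
Lemma lex_irr : irreflexive lex.
Proof. by move=> v; rewrite /lex ltnn eqxx ltnn. Qed.
Lemma lex_tr : transitive lex.
Proof.
move=> v u t; rewrite /lex.
case: (ltngtP (kf u) (kf v)) => h1; case: (ltngtP (kf v) (kf t)) => h2 //=;
  rewrite ?orbF //=; try lia.
Qed.
Lemma lex_tot a b : a != b -> lex a b || lex b a.
Proof.
move=> ne; rewrite /lex; case: (ltngtP (kf a) (kf b)) => //= _.
case: (ltngtP a b) => //= e; by rewrite (val_inj e) eqxx in ne.
Qed.
Lemma lex_perm : exists s, forall u v, inv s u v = (u < v) && lex v u.
Proof.
have [s hs] := order_perm lex_irr lex_tr lex_tot.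
by exists s => u v; rewrite /inv hs.
Qed.
End Lex.

Lemma gap_aux1 (a b c d : nat) : a.+1 < b -> b - a < d - c -> c.+1 < d.
Proof. lia. Qed.
Lemma gap_aux2 (a b d : nat) : a < b -> d - a <= b - a -> b < d -> False.
Proof. lia. Qed.
Lemma gap_aux3 (a b c : nat) : a < b -> b - c <= b - a -> c < a -> False.
Proof. lia. Qed.

Lemma phik_strict k : k < #|Ess| -> exists p q, phik k.+1 p = phik k.+1 q /\ phik k p != phik k q.
Proof.
move=> hk; rewrite -size_fl in hk.
case Efl: fl hk => [//|f0 r] hk; rewrite -Efl in hk.
set f := nth f0 fl k.
have ffl : f \in fl by apply: mem_nth.
have kf : key f = k by rewrite /key index_uniq // uniq_fl.
have fE : f \in Ess by rewrite -mem_fl.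
clear ffl; move: kf fE; case: f => [[a b] L] kf fE.
move: (fE); rewrite inE /= => /andP[ab1 sL].
have ab : a < b by lia.
have aL : a \notin L by apply/negP => /(subsetP sL); rewrite inE ltnn.
have bL : b \notin L by apply/negP => /(subsetP sL); rewrite inE ltnn andbF.
have nab : a != b by apply/negP => /eqP e; rewrite e ltnn in ab.
pose kp v := if v == a then 1 else if v == b then 2 else if v \in L then 0 else 3.
pose kq v := if v == a then 2 else if v == b then 1 else if v \in L then 0 else 3.
have [p hp] := lex_perm kp.
have [q hq] := lex_perm kq.
have kpq : forall v, v != a -> v != b -> kp v = kq v.
  by move=> v /negbTE va /negbTE vb; rewrite /kp /kq va vb.
have kpv : forall v, v != a -> v != b -> kp v = if v \in L then 0 else 3.
  by move=> v /negbTE va /negbTE vb; rewrite /kp va vb.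
have nba : (b == a) = false by rewrite eq_sym (negbTE nab).
have ipab : inv p a b = false by rewrite hp ab /lex /kp !eqxx nba.
have iqab : inv q a b = true by rewrite hq ab /lex /kq !eqxx nba.

have kqv : forall v, v != a -> v != b -> kq v = if v \in L then 0 else 3.
  by move=> v /negbTE va /negbTE vb; rewrite /kq va vb.
have kpa : kp a = 1 by rewrite /kp eqxx.
have kqa : kq a = 2 by rewrite /kq eqxx.
have kpb : kp b = 2 by rewrite /kp eqxx nba.
have kqb : kq b = 1 by rewrite /kq eqxx nba.
have inv_eq : forall u v : 'I_n, u < v -> ~~ ((u == a) && (v == b)) -> inv p u v = inv q u v.
  move=> u v uv nuv; rewrite hp hq uv /=.
  case: (eqVneq u a) => [eua|nua]; case: (eqVneq v b) => [evb|nvb].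
  - by rewrite eua evb !eqxx in nuv.
  - subst u; have nva : v != a by apply/negP => /eqP e; subst v; rewrite ltnn in uv.
    rewrite /lex kpa kqa (kpv v nva nvb) (kqv v nva nvb).
    by case: (v \in L).
  - subst v; have nub : u != b by apply/negP => /eqP e; subst u; rewrite ltnn in uv.
    rewrite /lex kpb kqb (kpv u nua nub) (kqv u nua nub).
    by case: (u \in L).
  - case: (eqVneq u b) => [eub|nub]; case: (eqVneq v a) => [eva|nva].
    + subst; by rewrite ltnNge ltnW in uv.
    + subst u; rewrite /lex kpb kqb (kpv v nva nvb) (kqv v nva nvb).
      by case: (v \in L).
    + subst v; rewrite /lex kpa kqa (kpv u nua nub) (kqv u nua nub).
      by case: (u \in L).
    + by rewrite /lex (kpq u nua nub) (kpq v nva nvb).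
have freeq : free q a b.
  apply/forallP => c; apply/implyP => /andP[ac cb].
  have nca : c != a by apply/negP => /eqP e; subst c; rewrite ltnn in ac.
  have ncb : c != b by apply/negP => /eqP e; subst c; rewrite ltnn in cb.
  rewrite !hq ac cb /= /lex (kqv c nca ncb) kqa kqb.
  by case: (c \in L).
have Lsq : Ls q a b = L.
  apply/setP => c; rewrite inE; case hc: (a < c < b); last first.
    by apply/esym/negbTE/negP => /(subsetP sL); rewrite inE hc.
  case/andP: hc => ac cb.
  have nca : c != a by apply/negP => /eqP e; subst c; rewrite ltnn in ac.
  have ncb : c != b by apply/negP => /eqP e; subst c; rewrite ltnn in cb.
  rewrite hq ac /= /lex (kqv c nca ncb) kqa.
  by case: (c \in L).
exists p, q; split.
- apply: phiP' => c d.
  case cd: (c < d); last by rewrite /vis /inv cd.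
  case: (eqVneq (c, d) (a, b)) => [[-> ->]|ne].
  + rewrite /vis ipab iqab /= freeq Lsq /=.
    by rewrite /Hk fE kf ltnSn /= andbF.
  + have ne' : ~~ ((c == a) && (d == b)) by apply: contra ne => /andP[/eqP -> /eqP ->].
    case: (ltnP (b - a) (d - c)) => hg.
    * have hD : Dk k.+1 c d.
        apply/forallP => L'; apply/implyP => sL'.
        have E' : (c, d, L') \in Ess by rewrite inE /= sL' andbT; exact: gap_aux1 ab1 hg.
        rewrite /Hk E' /=; have := key_order fE E' hg; rewrite kf => h.
        by rewrite ltnS ltnW.
      by rewrite /vis hD !andbF.
    * have ag : agree p q c d.
        move=> e /andP[ce ed]; split; apply: inv_eq => //; apply/negP => /andP[/eqP h1 /eqP h2].
        - by move: hg ed; rewrite h1 h2; apply: gap_aux2 ab.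
        - by move: hg ce; rewrite h1 h2; apply: gap_aux3 ab.
      by rewrite /vis (inv_eq _ _ cd ne') (agree_free ag) (agree_Ls ag).
- apply/negP => /eqP /phiP /(_ a b).
  have nD : Dk k a b = false.
    apply/negbTE/negP => /forallP /(_ L); rewrite sL /= /Hk fE kf ltnn.
    by [].
  by rewrite /vis ipab iqab nD freeq Lsq /Hk fE kf ltnn.
Qed.


End Main.

Section Count.
Variable n : nat.

Lemma cls_lt (phi1 phi2 : 'S_n -> {set 'I_n * 'I_n}) :
  (forall p q, phi1 p = phi1 q -> phi2 p = phi2 q) ->
  (exists p q, phi2 p = phi2 q /\ phi1 p != phi1 q) ->
  #|qverts (fun p q => phi2 p == phi2 q)| < #|qverts (fun p q => phi1 p == phi1 q)|.
Proof.
move=> mono [p0 [q0 [e2 ne1]]].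
set R1 := (fun p q : 'S_n => phi1 p == phi1 q).
set R2 := (fun p q : 'S_n => phi2 p == phi2 q).
pose G (X : {set 'S_n}) := \bigcup_(x in X) cls R2 x.
have claim : forall p, G (cls R1 p) = cls R2 p.
  move=> p; apply/setP => t; apply/bigcupP/idP.
  - case=> x; rewrite !inE /R1 /R2 => /eqP/mono -> //.
  - by move=> h; exists p; rewrite // !inE /R1.
have eq : qverts R2 = G @: qverts R1.
  rewrite /qverts -imset_comp; apply: eq_imset => p /=; by rewrite claim.
rewrite eq ltn_neqAle leq_imset_card andbT; apply/negP => /imset_injP inj.
have h1 : cls R1 p0 \in qverts R1 by apply: imset_f; rewrite inE.
have h2 : cls R1 q0 \in qverts R1 by apply: imset_f; rewrite inE.
have := inj _ _ h1 h2; rewrite !claim.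
have -> : cls R2 p0 = cls R2 q0.
  by apply/setP => t; rewrite !inE /R2 e2.
move=> /(_ erefl) /setP /(_ q0); rewrite !inE /R1 eqxx (negbTE ne1).
by [].
Qed.

Lemma iso_card (R S : rel 'S_n) : Q_iso R S -> #|qverts R| = #|qverts S|.
Proof. by case=> f [inj img _]; rewrite -img (card_in_imset inj). Qed.

Definition cnt k := #|qverts (@Rk n k)|.

Lemma cnt_step k : k < #|Ess n| -> cnt k.+1 < cnt k.
Proof.
move=> hk; apply: cls_lt; first exact: phik_mono.
exact: phik_strict.
Qed.

Lemma cnt_chain i j : i < j -> j <= #|Ess n| -> cnt j < cnt i.
Proof.
elim: j => // j IH ij hj.
have hs := cnt_step hj.
case: (ltngtP i j) => h.
- exact: ltn_trans hs (IH h (ltnW hj)).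
- lia.
- by rewrite h.
Qed.

Lemma card_Ess : 0 < n -> 2 ^ n - 2 * n <= #|Ess n|.
Proof.
move=> n0.
pose h (f : FT n) : {set 'I_n} := f.1.1 |: (f.1.2 |: f.2).
have a0lt : n.-1 < n by rewrite ltn_predL.
pose a0 : 'I_n := Ordinal a0lt.
pose sm (u : 'I_n + 'I_n) : {set 'I_n} := match u with
  | inl x => [set x]
  | inr x => [set y : 'I_n | (x.+1 < n) && ((y == x) || (nat_of_ord y == x.+1))] end.
set SM := [set sm u | u in [set: 'I_n + 'I_n]].
have hsm : #|SM| <= 2 * n.
  by apply: leq_trans (leq_imset_card _ _) _; rewrite cardsT card_sum card_ord; lia.
have sub : ~: SM \subset h @: Ess n.
  apply/subsetP => X; rewrite inE => nX.
  have nsm : forall u, X != sm u by move=> u; apply: contra nX => /eqP ->; apply: imset_f; rewrite inE.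
  case: (set_0Vmem X) => [X0|[x xX]].
    have := nsm (inr a0); rewrite X0; case/negP; apply/eqP/setP => y.
    by rewrite !inE /= prednK // ltnn.
  have [y yX nyx] : exists2 y, y \in X & y != x.
    case: (pickP [pred y | (y \in X) && (y != x)]) => [y /andP[]|none]; first by exists y.
    have := nsm (inl x); case/negP; apply/eqP/setP => y; rewrite inE /=.
    apply/idP/idP => [yX|/eqP ->//]; have := none y; rewrite /= yX /=.
    by move/negbT; rewrite negbK.
  case: (arg_minnP (fun i : 'I_n => nat_of_ord i) xX) => a aX amin.
  case: (arg_maxnP (fun i : 'I_n => nat_of_ord i) xX) => b bX bmax.
  have ax := amin x xX; have ay := amin y yX; have xb := bmax x xX; have yb := bmax y yX.
  have nxy : nat_of_ord x != nat_of_ord y by apply: contra nyx => /eqP /val_inj ->.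
  have ab : a < b by move: nxy; lia.
  have ab1 : a.+1 < b.
    rewrite ltn_neqAle ab andbT; apply/negP => /eqP eab.
    have := nsm (inr a); case/negP; apply/eqP/setP => c; rewrite inE.
    have -> : a.+1 < n by rewrite eab.
    apply/idP/idP => [cX|/orP[/eqP ->//|/eqP e]].
    - have h1 := amin c cX; have h2 := bmax c cX; rewrite /= -eab in h1 h2.
      have [e|e] : nat_of_ord c = a \/ nat_of_ord c = a.+1 by lia.
      + by apply/orP; left; apply/eqP/val_inj.
      + by apply/orP; right; apply/eqP.
    - by have -> : c = b by apply: val_inj => /=; rewrite e eab.
  apply/imsetP; exists (a, b, X :\ a :\ b).
  - rewrite inE /= ab1 /=; apply/subsetP => c; rewrite !inE => /and3P[ncb nca cX].
    have := amin c cX; have := bmax c cX => h1 h2.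
    have : nat_of_ord c != a by apply: contra nca => /eqP /val_inj ->.
    have : nat_of_ord c != b by apply: contra ncb => /eqP /val_inj ->.
    lia.
  - apply/setP => c; rewrite /h /= !inE.
    case: (eqVneq c a) => [->//|_]; case: (eqVneq c b) => [->//|_] //.
have c1 : #|~: SM| <= #|Ess n| := leq_trans (subset_leq_card sub) (leq_imset_card h (Ess n)).
have c3 : 2 ^ n <= #|SM| + #|~: SM|.
  rewrite cardsC; have := max_card (mem (powerset [set: 'I_n])).
  by rewrite card_powerset cardsT card_ord.
move: c1 c3 hsm; lia.
Qed.

End Count.

Unset Implicit Arguments.
Theorem mainTheorem9 (n : nat) (hn : 3 <= n) :
  exists (k : nat) (Rs : nat -> rel 'S_n),
    [/\ 2 ^ n - 2 * n + 1 <= k,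
        (forall i, i < k -> lattice_congruence (Rs i) /\ essential (Rs i)) &
        (forall i j, i < k -> j < k -> i != j -> ~ Q_iso (Rs i) (Rs j))].
Proof.
exists (#|Ess n|.+1), (@Rk n); split.
- have n0 : 0 < n by apply: leq_trans hn.
  have := card_Ess n0; lia.
- by move=> i _; split; [exact: Rk_cong | exact: Rk_ess].
- move=> i j hi hj ij /iso_card.
  rewrite -/(cnt _ i) -/(cnt _ j).
  case: (ltngtP i j) => h.
  + by have := cnt_chain h hj => /[swap] ->; rewrite ltnn.
  + by have := cnt_chain h hi => /[swap] ->; rewrite ltnn.
  + by rewrite h eqxx in ij.
Qed.
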